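(* For every point set $X$ that is a permutation, $\mathrm{GB}(X)\le 2\,\mathrm{opt}(X)$.
   Context: Points have integer coordinates; $X$ is a permutation if every horizontal and every vertical line contains at most one point of $X$. Two points are collinear if they share an $x$- or a $y$-coordinate; for non-collinear $p,q$, $\square_{p,q}$ is the smallest closed axis-parallel rectangle containing both; the pair is satisfied in $S$ if some $r\in S\setminus\{p,q\}$ lies in $\square_{p,q}$, and $S$ is satisfied if all its non-collinear pairs are. $\mathrm{opt}(X)$ is the minimum $|Y|$ with $X\cup Y$ satisfied. Guillotine bound: a guillotine partitioning tree $T$ is built as follows. The root $r$ has region $S(r)=B$, a bounding box of $X$. While some leaf $v$ has $|S(v)\cap X|>1$, choose such $v$ and a vertical or horizontal line $L(v)$ inside $S(v)$ containing no point of $X$ that splits $S(v)$ into two rectangles $S',S''$ with $X\cap S'\ne\emptyset\ne X\cap S''$; give $v$ two children with regions $S'$ and $S''$. The cost of an internal vertex $v$ is the number of pairs of points of $X\cap S(v)$ that are consecutive in increasing $y$-order (if $L(v)$ is vertical) or in increasing $x$-order (if $L(v)$ is horizontal) and lie on opposite sides of $L(v)$; leaves cost $0$. $\mathrm{GB}_T(X)$ is the total cost and $\mathrm{GB}(X)=\max_T\mathrm{GB}_T(X)$. *)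

(* Defs.v *)
From HB Require Import structures.
From mathcomp Require Import all_boot all_order all_algebra.
From mathcomp Require Import finmap.
From Stdlib Require Import ClassicalEpsilon.

Set Implicit Arguments.
Unset Strict Implicit.
Unset Printing Implicit Defensive.

Import Order.TTheory GRing.Theory Num.Theory.
Local Open Scope fset_scope.
Local Open Scope ring_scope.

Definition point := (int * int)%type.

Definition collinear (p q : point) : bool := (p.1 == q.1) || (p.2 == q.2).

Definition in_box (p q r : point) : bool :=
  [&& Num.min p.1 q.1 <= r.1, r.1 <= Num.max p.1 q.1,
      Num.min p.2 q.2 <= r.2 & r.2 <= Num.max p.2 q.2].

Definition is_permutation (X : {fset point}) : Prop :=
  forall p q, p \in X -> q \in X -> (p.1 = q.1 \/ p.2 = q.2) -> p = q.

Definition pair_satisfied (S : {fset point}) (p q : point) : Prop :=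
  exists2 r, r \in S & [&& r != p, r != q & in_box p q r].

Definition satisfied (S : {fset point}) : Prop :=
  forall p q, p \in S -> q \in S -> ~~ collinear p q -> pair_satisfied S p q.

(** Classical minimum / maximum of a set of naturals (0 if none exists). *)
Definition natmin (P : nat -> Prop) : nat :=
  match excluded_middle_informative
          (exists m : nat, P m /\ forall k, P k -> (m <= k)%N) with
  | left H => proj1_sig (constructive_indefinite_description _ H)
  | right _ => 0%N
  end.

Definition natmax (P : nat -> Prop) : nat :=
  match excluded_middle_informative
          (exists m : nat, P m /\ forall k, P k -> (k <= m)%N) with
  | left H => proj1_sig (constructive_indefinite_description _ H)
  | right _ => 0%N
  end.

Definition opt (X : {fset point}) : nat :=
  natmin (fun k => exists Y : {fset point}, satisfied (X `|` Y) /\ #|` Y| = k).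

(** Closed axis-parallel rectangles [xlo,xhi] x [ylo,yhi] with rational
    corners: ((xlo, xhi), (ylo, yhi)). *)
Definition rect := ((rat * rat) * (rat * rat))%type.

Definition in_rect (S : rect) (p : point) : bool :=
  [&& S.1.1 <= p.1%:~R, p.1%:~R <= S.1.2,
      S.2.1 <= p.2%:~R & p.2%:~R <= S.2.2].

Definition pts (X : {fset point}) (S : rect) : {fset point} :=
  [fset p in X | in_rect S p].

(** A guillotine partitioning tree: [Node vert c l r] cuts its region by the
    vertical line x = c (if [vert]) or the horizontal line y = c (otherwise);
    [l] is the child on the side of smaller coordinates. *)
Inductive gtree :=
  | Leaf : gtree
  | Node : bool -> rat -> gtree -> gtree -> gtree.

Definition cut_coord (vert : bool) (p : point) : rat :=
  if vert then p.1%:~R else p.2%:~R.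
Definition ord_coord (vert : bool) (p : point) : int :=
  if vert then p.2 else p.1.

Definition split_left (vert : bool) (c : rat) (S : rect) : rect :=
  if vert then ((S.1.1, c), S.2) else (S.1, (S.2.1, c)).
Definition split_right (vert : bool) (c : rat) (S : rect) : rect :=
  if vert then ((c, S.1.2), S.2) else (S.1, (c, S.2.2)).

Definition line_inside (vert : bool) (c : rat) (S : rect) : bool :=
  if vert then (S.1.1 < c < S.1.2) else (S.2.1 < c < S.2.2).

Fixpoint valid (X : {fset point}) (S : rect) (T : gtree) : Prop :=
  match T with
  | Leaf => (#|` pts X S| <= 1)%N
  | Node vert c l r =>
      line_inside vert c S /\
      (forall p, p \in pts X S -> cut_coord vert p != c) /\
      pts X (split_left vert c S) != fset0 /\
      pts X (split_right vert c S) != fset0 /\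
      valid X (split_left vert c S) l /\
      valid X (split_right vert c S) r
  end.

Definition node_cost (X : {fset point}) (S : rect) (vert : bool) (c : rat) : nat :=
  let XS := pts X S in
  (\sum_(p <- XS) \sum_(q <- XS)
     nat_of_bool [&& ord_coord vert p < ord_coord vert q,
         ~~ has (fun r => ord_coord vert p < ord_coord vert r < ord_coord vert q) XS
       & (cut_coord vert p < c) != (cut_coord vert q < c)]%R)%N.

Fixpoint tree_cost (X : {fset point}) (S : rect) (T : gtree) : nat :=
  match T with
  | Leaf => 0%N
  | Node vert c l r =>
      (node_cost X S vert c + tree_cost X (split_left vert c S) l
       + tree_cost X (split_right vert c S) r)%N
  end.

Definition bounding_box (X : {fset point}) (B : rect) : Prop :=
  forall p, p \in X -> in_rect B p.

Definition is_guillotine_tree (X : {fset point}) (B : rect) (T : gtree) : Prop :=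
  bounding_box X B /\ valid X B T.

Definition GB (X : {fset point}) : nat :=
  natmax (fun g => exists B T, is_guillotine_tree X B T /\ tree_cost X B T = g).

(* Main.v *)
Require Import Defs.
From HB Require Import structures.
From mathcomp Require Import all_boot all_order all_algebra finmap.
From mathcomp Require Import zify lra.
From Stdlib Require Import ClassicalEpsilon.
Set Implicit Arguments.
Unset Strict Implicit.
Unset Printing Implicit Defensive.
Import Order.TTheory GRing.Theory Num.Theory.

Section Geo.
Local Open Scope fset_scope.
Local Open Scope ring_scope.

Definition btw (a b x : int) : bool := ((a <= x) && (x <= b)) || ((b <= x) && (x <= a)).

Lemma in_boxE p q r : in_box p q r = btw p.1 q.1 r.1 && btw p.2 q.2 r.2.
Proof.
rewrite /in_box /btw; apply/idP/idP.
  by move=> H; lia.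
by move=> H; lia.
Qed.

Definition cc (vert : bool) (p : point) : int := if vert then p.1 else p.2.

Lemma in_boxV vert p q r : in_box p q r =
  btw (cc vert p) (cc vert q) (cc vert r) && btw (ord_coord vert p) (ord_coord vert q) (ord_coord vert r).
Proof. by rewrite in_boxE /cc /ord_coord; case: vert => //; rewrite andbC. Qed.

Lemma collinearV vert p q : collinear p q =
  (cc vert p == cc vert q) || (ord_coord vert p == ord_coord vert q).
Proof. by rewrite /collinear /cc /ord_coord; case: vert => //; rewrite orbC. Qed.

Definition msr (p q : point) : nat := (absz (p.1 - q.1) + absz (p.2 - q.2))%N.

Lemma pt_neq (p r : point) : r != p -> (r.1 != p.1) || (r.2 != p.2).
Proof. case: p r => [a b] [c d] /=; apply: contraR; rewrite negb_or !negbK => /andP[/eqP-> /eqP->] //. Qed.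

Lemma msr_ltl p q r : in_box p q r -> r != p -> (msr r q < msr p q)%N.
Proof. rewrite in_boxE /btw /msr => H /pt_neq H2; lia. Qed.

Lemma msr_ltr p q r : in_box p q r -> r != q -> (msr p r < msr p q)%N.
Proof. rewrite in_boxE /btw /msr => H /pt_neq H2; lia. Qed.

Lemma box_l p q : in_box p q p.
Proof. rewrite in_boxE /btw; lia. Qed.
Lemma box_r p q : in_box p q q.
Proof. rewrite in_boxE /btw; lia. Qed.

Lemma box_subl p q r z : in_box p q r -> in_box r q z -> in_box p q z.
Proof. rewrite !in_boxE /btw => H1 H2; lia. Qed.
Lemma box_subr p q r z : in_box p q r -> in_box p r z -> in_box p q z.
Proof. rewrite !in_boxE /btw => H1 H2; lia. Qed.


Lemma collision vert (W : {fset point}) p q :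
  satisfied W -> p \in W -> q \in W -> ~~ collinear p q ->
  exists u w, [/\ u \in W, w \in W, u != w, cc vert u = cc vert w &
                  in_box p q u && in_box p q w].
Proof.
move=> sW; move: {2}(msr p q) (leqnn (msr p q)) => n.
elim: n p q => [|n IH] p q Hm pW qW ncol.
  exfalso; move: ncol; rewrite /collinear; move: Hm; rewrite /msr => Hm; lia.
have [r rW /and3P[rp rq br]] := sW p q pW qW ncol.
have Hpc := ncol; rewrite (collinearV vert) negb_or in Hpc; case/andP: Hpc => ncc noc.
case: (eqVneq (cc vert r) (cc vert p)) => [E|N1].
  by exists r, p; rewrite rW pW rp E br box_l.
case: (eqVneq (cc vert r) (cc vert q)) => [E|N2].
  by exists r, q; rewrite rW qW rq E br box_r.
case: (eqVneq (ord_coord vert r) (ord_coord vert q)) => [E|N3].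
- have nc : ~~ collinear p r.
    by rewrite (collinearV vert) negb_or eq_sym N1 /= E.
  have Hm' : (msr p r <= n)%N by have := msr_ltr br rq; lia.
  have [u [w [uW wW uw E' /andP[bu bw]]]] := IH p r Hm' pW rW nc.
  by exists u, w; rewrite uW wW uw E' (box_subr br bu) (box_subr br bw).
- have nc : ~~ collinear r q by rewrite (collinearV vert) negb_or N2 N3.
  have Hm' : (msr r q <= n)%N by have := msr_ltl br rp; lia.
  have [u [w [uW wW uw E' /andP[bu bw]]]] := IH r q Hm' rW qW nc.
  by exists u, w; rewrite uW wW uw E' (box_subl br bu) (box_subl br bw).
Qed.

Section Merge.
Variable f : point -> point.
Hypothesis fcol : forall p q, collinear p q -> collinear (f p) (f q).
Hypothesis fbox : forall p q r, in_box p q r -> in_box (f p) (f q) (f r).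

Lemma merge_sat (A : {fset point}) : satisfied A -> satisfied [fset f z | z in A].
Proof.
move=> sA p' q' /imfsetP[p pA ->] /imfsetP[q qA ->] ncol.
move: {2}(msr p q) (leqnn (msr p q)) => n.
elim: n p q pA qA ncol => [|n IH] p q pA qA ncol Hm.
  have : collinear p q by rewrite /collinear; move: Hm; rewrite /msr => Hm; lia.
  by move/fcol; rewrite (negbTE ncol).
have ncpq : ~~ collinear p q by apply: contra ncol; apply: fcol.
have [r rA /and3P[rp rq br]] := sA p q pA qA ncpq.
case: (eqVneq (f r) (f p)) => [E|N1].
  rewrite -E; apply: IH => //; first by rewrite E.
  by have := msr_ltl br rp; lia.
case: (eqVneq (f r) (f q)) => [E|N2].
  rewrite -E; apply: IH => //; first by rewrite E.
  by have := msr_ltr br rq; lia.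
exists (f r); first by apply/imfsetP; exists r.
by rewrite N1 N2 fbox.
Qed.
End Merge.


Lemma sat_restrict (Z : {fset point}) (P : pred point) :
  (forall p q r, P p -> P q -> in_box p q r -> P r) ->
  satisfied Z -> satisfied [fset z in Z | P z].
Proof.
move=> cvx sZ p q; rewrite !inE => /andP[pZ Pp] /andP[qZ Pq] ncol.
have [r rZ /and3P[rp rq br]] := sZ p q pZ qZ ncol.
by exists r; rewrite ?inE ?rZ ?(cvx p q r) ?rp ?rq ?br.
Qed.

Lemma btw_lo (lo : rat) a b x : btw a b x -> lo <= a%:~R -> lo <= b%:~R -> lo <= x%:~R.
Proof.
rewrite /btw => /orP[/andP[H _]|/andP[H _]] Ha Hb.
  by apply: le_trans Ha _; rewrite ler_int.
by apply: le_trans Hb _; rewrite ler_int.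
Qed.

Lemma btw_hi (hi : rat) a b x : btw a b x -> a%:~R <= hi -> b%:~R <= hi -> x%:~R <= hi.
Proof.
rewrite /btw => /orP[/andP[_ H]|/andP[_ H]] Ha Hb.
  by apply: le_trans _ Hb; rewrite ler_int.
by apply: le_trans _ Ha; rewrite ler_int.
Qed.

Lemma btw_lt (hi : rat) a b x : btw a b x -> a%:~R < hi -> b%:~R < hi -> x%:~R < hi.
Proof.
rewrite /btw => /orP[/andP[_ H]|/andP[_ H]] Ha Hb.
  by apply: le_lt_trans _ Hb; rewrite ler_int.
by apply: le_lt_trans _ Ha; rewrite ler_int.
Qed.

Lemma btw_gt (lo : rat) a b x : btw a b x -> lo < a%:~R -> lo < b%:~R -> lo < x%:~R.
Proof.
rewrite /btw => /orP[/andP[H _]|/andP[H _]] Ha Hb.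
  by apply: lt_le_trans Ha _; rewrite ler_int.
by apply: lt_le_trans Hb _; rewrite ler_int.
Qed.

Lemma rect_cvx (S : rect) p q r : in_rect S p -> in_rect S q -> in_box p q r -> in_rect S r.
Proof.
rewrite /in_rect in_boxE => /and4P[a1 a2 a3 a4] /and4P[b1 b2 b3 b4] /andP[H1 H2].
by rewrite (btw_lo H1) ?(btw_hi H1) ?(btw_lo H2) ?(btw_hi H2).
Qed.

Lemma cut_ccE vert p : cut_coord vert p = (cc vert p)%:~R.
Proof. by case: vert. Qed.

Lemma lt_cvx vert (c : rat) p q r : cut_coord vert p < c -> cut_coord vert q < c ->
  in_box p q r -> cut_coord vert r < c.
Proof. rewrite !cut_ccE (in_boxV vert) => Hp Hq /andP[H _]; exact: btw_lt H Hp Hq. Qed.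

Lemma gt_cvx vert (c : rat) p q r : c < cut_coord vert p -> c < cut_coord vert q ->
  in_box p q r -> c < cut_coord vert r.
Proof. rewrite !cut_ccE (in_boxV vert) => Hp Hq /andP[H _]; exact: btw_gt H Hp Hq. Qed.


Lemma sum_pairs_le (s : seq point) (P : point -> point -> bool)
  (w : point -> point -> point) (D : {fset point}) :
  uniq s ->
  (forall p q, p \in s -> q \in s -> P p q -> w p q \in D) ->
  (forall p q p' q', p \in s -> q \in s -> p' \in s -> q' \in s ->
     P p q -> P p' q' -> w p q = w p' q' -> p = p' /\ q = q') ->
  (\sum_(p <- s) \sum_(q <- s) nat_of_bool (P p q) <= #|` D|)%N.
Proof.
move=> us inD inj.
rewrite -(big_allpairs (F := fun pq : point * point => nat_of_bool (P pq.1 pq.2))).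
set L := [seq (i1, i2) | i1 <- s, i2 <- s].
have -> : (\sum_(i <- L) nat_of_bool (P i.1 i.2) = \sum_(i <- L | P i.1 i.2) 1)%N.
  by rewrite [RHS]big_mkcond; apply: eq_bigr => i _; case: (P _ _).
rewrite sum1_count -size_filter.
set F := filter _ L.
have uL : uniq L by apply: allpairs_uniq => // [[a b]] [a' b'] _ _ [-> ->].
have memF : forall pq, pq \in F -> [/\ pq.1 \in s, pq.2 \in s & P pq.1 pq.2].
  move=> [a b]; rewrite mem_filter => /andP[/= Pab /allpairsP[[x y] /= [xs ys [E1 E2]]]].
  by subst; split.
rewrite -(size_map (fun pq => w pq.1 pq.2)).
apply: uniq_leq_size.
  rewrite map_inj_in_uniq; first exact: filter_uniq.
  move=> [a b] [a' b'] /memF[? ? ?] /memF[? ? ?] /= E.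
  by case: (inj a b a' b') => // -> ->.
move=> z /mapP[[a b] /memF[? ? ?] ->]; exact: inD.
Qed.


Definition child (S : rect) vert c (side : bool) :=
  if side then split_left vert c S else split_right vert c S.

Lemma child_in (S : rect) vert (c : rat) side x : line_inside vert c S -> in_rect (child S vert c side) x ->
  in_rect S x && (if side then cut_coord vert x <= c else c <= cut_coord vert x).
Proof.
case: S => [[a b] [a' b']]; rewrite /child /line_inside /in_rect /split_left /split_right /cut_coord.
case: vert; case: side => /=; move=> /andP[h1 h2] H; case/and4P: H => k1 k2 k3 k4; repeat (apply/andP; split); try done; lra.

Qed.

Lemma child_back (S : rect) vert (c : rat) side x : in_rect S x ->
  (if side then cut_coord vert x < c else c < cut_coord vert x) ->
  in_rect (child S vert c side) x.
Proof.
case: S => [[a b] [a' b']]; rewrite /child /in_rect /split_left /split_right /cut_coord.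
case: vert; case: side => /= /and4P[k1 k2 k3 k4] h;
  repeat (apply/andP; split); try done; lra.
Qed.

Lemma in_pts (Z : {fset point}) S x : (x \in pts Z S) = (x \in Z) && in_rect S x.
Proof. by rewrite /pts inE. Qed.

Section Node.
Variable X : {fset point}.
Hypothesis HX : is_permutation X.
Variables (S : rect) (vert : bool) (c : rat) (s : bool).

Let XS := pts X S.
Let oc := ord_coord vert.
Let cut := cut_coord vert.

Definition condn p q := [&& oc p < oc q,
   ~~ has (fun r => oc p < oc r < oc q) XS & (cut p < c) != (cut q < c)].
Definition Ps p q := condn p q && ((cut p < c) == s).
Definition PL := [seq pq <- [seq (p, q) | p <- XS, q <- XS] | Ps pq.1 pq.2].

Lemma XS_X p : p \in XS -> p \in X.
Proof. by rewrite /XS /pts inE => /andP[]. Qed.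

Lemma perm_oc p q : p \in XS -> q \in XS -> oc p = oc q -> p = q.
Proof.
move=> /XS_X pX /XS_X qX E; apply: HX => //.
by move: E; rewrite /oc /ord_coord; case: vert; [right|left].
Qed.

Lemma PLP pq : pq \in PL -> [/\ pq.1 \in XS, pq.2 \in XS & Ps pq.1 pq.2].
Proof.
case: pq => a b; rewrite mem_filter => /andP[/= Pab /allpairsP[[x y] /= [xs ys [E1 E2]]]].
by subst; split.
Qed.

Lemma PL_in p q : p \in XS -> q \in XS -> Ps p q -> (p, q) \in PL.
Proof.
move=> pX qX P; rewrite mem_filter /= P /=.
by apply/allpairsP; exists (p, q).
Qed.

Lemma nobetween pq r : pq \in PL -> r \in XS -> ~~ (oc pq.1 < oc r < oc pq.2).
Proof.
case/PLP=> _ _ /andP[/and3P[_ /hasPn H _] _] rX; exact: H.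
Qed.

Lemma band_uniq1 pq pq' t : pq \in PL -> pq' \in PL ->
  oc pq.1 <= oc pq'.1 ->
  oc pq.1 <= t <= oc pq.2 -> oc pq'.1 <= t <= oc pq'.2 -> pq = pq'.
Proof.
move=> H H' Ha Ht Ht'.
have [p1 p2 /andP[/and3P[lt1 _ sg1] s1]] := PLP H.
have [p1' p2' /andP[/and3P[lt1' _ sg1'] s1']] := PLP H'.
have nb := nobetween H; have nb' := nobetween H'.
case: (ltgtP (oc pq.1) (oc pq'.1)) Ha => // [lta|eqa] _.
  have : ~~ (oc pq.1 < oc pq'.1 < oc pq.2) := nb _ p1'.
  case: (ltgtP (oc pq'.1) (oc pq.2)) => [l|l|e] /=.
  - by rewrite lta.
  - by move=> _; exfalso; move: Ht Ht' l; lia.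
  - have E := perm_oc p1' p2 e.
    by move: sg1; rewrite -E (eqP s1) (eqP s1') eqxx.
have E1 := perm_oc p1 p1' eqa.
case: (ltgtP (oc pq.2) (oc pq'.2)) => [l|l|e].
- have := nb' _ p2; rewrite -E1 lt1 l //.
- have := nb _ p2'; rewrite E1 lt1' l //.
- have E2 := perm_oc p2 p2' e.
  by case: pq pq' E1 E2 {H H' Ht Ht' p1 p2 p1' p2' lt1 lt1' sg1 sg1' s1 s1' nb nb' eqa e}
    => [a b] [a' b'] /= -> ->.
Qed.

Lemma band_uniq pq pq' t : pq \in PL -> pq' \in PL ->
  oc pq.1 <= t <= oc pq.2 -> oc pq'.1 <= t <= oc pq'.2 -> pq = pq'.
Proof.
move=> H H' Ht Ht'.
case: (lerP (oc pq.1) (oc pq'.1)) => l; first exact: band_uniq1 l Ht Ht'.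
by symmetry; apply: band_uniq1 (ltW l) Ht' Ht.
Qed.


Definition endp (side : bool) (pq : point * point) := if s == side then pq.1 else pq.2.

Definition gg (side : bool) (t : int) : int :=
  if [seq pq <- PL | oc pq.1 <= t <= oc pq.2] is pq :: _ then oc (endp side pq) else t.

Lemma gg_band side pq t : pq \in PL -> oc pq.1 <= t <= oc pq.2 -> gg side t = oc (endp side pq).
Proof.
move=> H Ht; rewrite /gg.
case E: [seq pq <- PL | oc pq.1 <= t <= oc pq.2] => [|pq' l].
  have : pq \in [seq pq <- PL | oc pq.1 <= t <= oc pq.2] by rewrite mem_filter Ht H.
  by rewrite E.
have : pq' \in [seq pq <- PL | oc pq.1 <= t <= oc pq.2] by rewrite E mem_head.
by rewrite mem_filter => /andP[Ht' H']; rewrite (band_uniq H' H Ht' Ht).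
Qed.

Lemma gg_out side t : (forall pq, pq \in PL -> ~~ (oc pq.1 <= t <= oc pq.2)) -> gg side t = t.
Proof.
move=> H; rewrite /gg.
case E: [seq pq <- PL | oc pq.1 <= t <= oc pq.2] => [|pq' l] //.
have : pq' \in [seq pq <- PL | oc pq.1 <= t <= oc pq.2] by rewrite E mem_head.
by rewrite mem_filter => /andP[Ht' H']; move: (H _ H'); rewrite Ht'.
Qed.

Lemma endp_band side pq : pq \in PL -> oc pq.1 <= oc (endp side pq) <= oc pq.2.
Proof.
case: pq => a b; case/PLP=> _ _ /andP[/and3P[hlt _ _] _]; rewrite /= in hlt; rewrite /endp; case: (s == side) => /=; lia.
Qed.

Lemma gg_cases t :
  (exists2 pq, pq \in PL & oc pq.1 <= t <= oc pq.2) \/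
  (forall pq, pq \in PL -> ~~ (oc pq.1 <= t <= oc pq.2)).
Proof.
case: (boolP (has (fun pq => oc pq.1 <= t <= oc pq.2) PL)).
  by case/hasP=> pq H Ht; left; exists pq.
by move/hasPn=> H; right.
Qed.

Lemma gg_mono side t1 t2 : t1 <= t2 -> gg side t1 <= gg side t2.
Proof.
move=> hle.
case: (gg_cases t1) => [[pq H Ht]|H1]; case: (gg_cases t2) => [[pq' H' Ht']|H2].
- rewrite (gg_band side H Ht) (gg_band side H' Ht').
  case: (eqVneq pq pq') => [<- //|ne].
  have := endp_band side H; have := endp_band side H'.
  have : oc pq.2 < oc pq'.1.
    rewrite ltNge; apply/negP => le.
    case: (lerP (oc pq.1) (oc pq'.1)) => l.
      by move/eqP: ne; apply; apply: (band_uniq (t := oc pq'.1)) => //; lia.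
    by move/eqP: ne; apply; apply: (band_uniq (t := oc pq.1)) => //; lia.
  lia.
- rewrite (gg_band side H Ht) (gg_out side H2).
  have := endp_band side H; have := H2 _ H; lia.
- rewrite (gg_band side H' Ht') (gg_out side H1).
  have := endp_band side H'; have := H1 _ H'; lia.
- by rewrite (gg_out side H1) (gg_out side H2).
Qed.


Definition hmap (side : bool) (z : point) : point :=
  if vert then (z.1, gg side z.2) else (gg side z.1, z.2).

Lemma hmap_cc side z : cc vert (hmap side z) = cc vert z.
Proof. by rewrite /hmap /cc; case: vert. Qed.

Lemma hmap_oc side z : oc (hmap side z) = gg side (oc z).
Proof. by rewrite /hmap /oc /ord_coord; case: vert. Qed.

Lemma hmap_cut side z : cut (hmap side z) = cut z.
Proof. by rewrite /cut !cut_ccE hmap_cc. Qed.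

Lemma hmap_col side p q : collinear p q -> collinear (hmap side p) (hmap side q).
Proof.
rewrite !(collinearV vert) !hmap_cc -!/oc !hmap_oc => /orP[->//|/eqP->].
by rewrite eqxx orbT.
Qed.

Lemma btw_mono (g : int -> int) a b x : (forall u v, u <= v -> g u <= g v) ->
  btw a b x -> btw (g a) (g b) (g x).
Proof.
move=> gm; rewrite /btw => /orP[/andP[h1 h2]|/andP[h1 h2]].
  by rewrite (gm _ _ h1) (gm _ _ h2).
by rewrite (gm _ _ h1) (gm _ _ h2) orbT.
Qed.

Lemma hmap_box side p q r : in_box p q r -> in_box (hmap side p) (hmap side q) (hmap side r).
Proof.
rewrite !(in_boxV vert) !hmap_cc -!/oc !hmap_oc => /andP[-> /=].
by apply: btw_mono => u v; apply: gg_mono.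
Qed.

Lemma hmap_fix side x : x \in XS -> (cut x < c) = side -> hmap side x = x.
Proof.
move=> xX sd.
suff : gg side (oc x) = oc x.
  by rewrite /hmap /oc /ord_coord; case: vert; case: x {xX sd} => a b /= ->.
case: (gg_cases (oc x)) => [[pq H Ht]|H]; last exact: gg_out.
rewrite (gg_band side H Ht).
have nb := nobetween H xX.
have [p1 p2 /andP[/and3P[_ _ sg] /eqP s1]] := PLP H.
have [e|e] : oc x = oc pq.1 \/ oc x = oc pq.2 by move: Ht nb; lia.
- have E := perm_oc xX p1 e; rewrite /endp.
  by rewrite -s1 -E sd eqxx.
- have E := perm_oc xX p2 e; rewrite /endp.
  have -> : (s == side) = false.
    by move: sg; rewrite -s1 -E sd => /negbTE.
  by rewrite E.
Qed.


Lemma pt_eq_cc (a b : point) : cc vert a = cc vert b -> oc a = oc b -> a = b.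
Proof. by case: a b => [a1 a2] [b1 b2]; rewrite /oc /cc /ord_coord; case: vert => /= -> ->. Qed.

Variable Z : {fset point}.
Hypothesis sZ : satisfied Z.
Hypothesis subXZ : (XS `<=` Z)%fset.

Let W := pts Z S.

Lemma satW : satisfied W.
Proof. apply: sat_restrict sZ => p q r; exact: rect_cvx. Qed.

Lemma XS_W x : x \in XS -> x \in W.
Proof.
move=> xX; have xZ := fsubsetP subXZ _ xX.
move: xX; rewrite /W /XS /pts !inE => /andP[_ ->]; by rewrite xZ.
Qed.

Definition Wside (side : bool) := [fset z in W | if side then cut z < c else c < cut z].

Lemma satWside side : satisfied (Wside side).
Proof.
apply: sat_restrict satW => p q r; case: side; [exact: lt_cvx | exact: gt_cvx].
Qed.

Definition colP (pq : point * point) (uw : point * point) : Prop :=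
  [/\ uw.1 \in W, uw.2 \in W, uw.1 != uw.2, cc vert uw.1 = cc vert uw.2 &
      in_box pq.1 pq.2 uw.1 && in_box pq.1 pq.2 uw.2].

Definition col pq := epsilon (inhabits ((0,0),(0,0))) (colP pq).

Lemma col_spec pq : pq \in PL -> colP pq (col pq).
Proof.
move=> H; rewrite /col; apply: epsilon_spec.
have [p1 p2 /andP[/and3P[hlt _ sg] _]] := PLP H.
have nc : ~~ collinear pq.1 pq.2.
  rewrite (collinearV vert) negb_or; apply/andP; split.
    apply: contra sg => /eqP e; by rewrite /cut !cut_ccE e.
  by rewrite -/oc neq_lt hlt.
have [u [w [uW wW uw E B]]] := collision vert satW (XS_W p1) (XS_W p2) nc.
by exists (u, w).
Qed.

Definition D := [fset (col pq).2 | pq in PL].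

Lemma col_band pq z : pq \in PL -> (z = (col pq).1 \/ z = (col pq).2) ->
  oc pq.1 <= oc z <= oc pq.2.
Proof.
move=> H e; have [_ _ _ _ /andP[b1 b2]] := col_spec H.
have [_ _ /andP[/and3P[hlt _ _] _]] := PLP H.
have : in_box pq.1 pq.2 z by case: e => ->.
rewrite (in_boxV vert) -!/oc => /andP[_]; rewrite /btw; move: hlt; lia.
Qed.

Lemma D_inv pq z : pq \in PL -> z \in D -> oc pq.1 <= oc z <= oc pq.2 -> z = (col pq).2.
Proof.
move=> H /imfsetP[pq' H' ->] Hb.
by rewrite (band_uniq H H' Hb (col_band H' (or_intror erefl))).
Qed.

Lemma u_notD pq : pq \in PL -> (col pq).1 \notin D.
Proof.
move=> H; apply/negP => uD.
have [_ _ ne _ _] := col_spec H.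
by move: ne; rewrite {1}(D_inv H uD (col_band H (or_introl erefl))) eqxx.
Qed.

Lemma D_sub : (D `<=` W)%fset.
Proof.
apply/fsubsetP => z /imfsetP[pq H ->]; by have [] := col_spec H.
Qed.

Definition ks := (\sum_(p <- XS) \sum_(q <- XS) nat_of_bool (Ps p q))%N.

Lemma ks_le : (ks <= #|` D|)%N.
Proof.
apply: (sum_pairs_le (w := fun p q => (col (p, q)).2)).
- exact: fset_uniq.
- move=> p q pX qX P; apply/imfsetP; exists (p, q) => //; exact: PL_in.
- move=> p q p' q' pX qX pX' qX' P P' E.
  have H := PL_in pX qX P; have H' := PL_in pX' qX' P'.
  have := band_uniq H H' (col_band H (or_intror erefl)).
  rewrite E => /(_ (col_band H' (or_intror erefl))) [-> ->]; by [].
Qed.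


Lemma inWside side z : (z \in Wside side) = (z \in W) && (if side then cut z < c else c < cut z).
Proof. by rewrite /Wside [in LHS]inE. Qed.

Lemma hmap_D side z : z \in Wside side ->
  exists z', [/\ z' \in Wside side, z' \notin D & hmap side z' = hmap side z].
Proof.
move=> zW; case: (boolP (z \in D)) => zD; last by exists z.
case/imfsetP: zD => pq H ez.
have [uW _ _ ecc _] := col_spec H.
exists (col pq).1; split.
- move: zW; rewrite !inWside ez uW /= /cut !cut_ccE ecc; by case/andP.
- exact: u_notD.
- apply: pt_eq_cc; first by rewrite !hmap_cc ez ecc.
  rewrite !hmap_oc (gg_band side H (col_band H (or_introl erefl))).
  by rewrite ez (gg_band side H (col_band H (or_intror erefl))).
Qed.

Definition Zc side := [fset hmap side z | z in Wside side].

Lemma Zc_card side : (#|` Zc side| <= #|` (Wside side `\` D)|)%N.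
Proof.
apply: (@leq_trans #|` [fset hmap side z | z in (Wside side `\` D)]|); last first.
  exact: leq_imfset_card.
apply: fsubset_leq_card; apply/fsubsetP => y /imfsetP[z zW ->].
have [z' [z'W z'D <-]] := hmap_D zW.
by apply/imfsetP; exists z' => //; rewrite inE z'D z'W.
Qed.

Lemma count3 : (#|` (Wside true `\` D)| + #|` (Wside false `\` D)| + #|` D| <= #|` W|)%N.
Proof.
set A := (Wside true `\` D); set B := (Wside false `\` D).
have dAB : (A `&` B = fset0)%fset.
  apply/fsetP => z; rewrite !inE.
  case: (cut z < c) / boolP => h1; case: (c < cut z) / boolP => h2 //=.
  - by move: (lt_trans h1 h2); rewrite ltxx.
  - by rewrite !andbF.
  - by rewrite !andbF.
  - by rewrite !andbF.
have dABD : ((A `|` B) `&` D = fset0)%fset.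
  by apply/fsetP => z; rewrite !inE; case: (z \in D); rewrite ?andbF.
have e1 := cardfsU A B; rewrite dAB cardfs0 subn0 in e1.
have e2 := cardfsU (A `|` B) D; rewrite dABD cardfs0 subn0 e1 in e2.
rewrite -e2; apply: fsubset_leq_card; apply/fsubsetP => z.
rewrite !inE; case/orP => [/orP[]|]; rewrite ?inE.
- by case/and3P.
- by case/and3P.
- by move/(fsubsetP D_sub); rewrite /W /pts inE.
Qed.

Lemma Zc_sat side : satisfied (Zc side).
Proof.
apply: merge_sat; [exact: hmap_col | exact: hmap_box | exact: satWside].
Qed.


Hypothesis Hline : line_inside vert c S.
Hypothesis Hnoline : forall p, p \in XS -> cut p != c.

Lemma Zc_contains side : (pts X (child S vert c side) `<=` Zc side)%fset.
Proof.
apply/fsubsetP => x; rewrite /pts inE => /andP[xX /(child_in Hline) /andP[xS hc]].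
have xXS : x \in XS by rewrite /XS /pts inE; apply/andP; split.
have hs : if side then cut x < c else c < cut x.
  have := Hnoline xXS; case: side hc => hc hn; rewrite lt_neqAle hc ?andbT //.
  by rewrite eq_sym.
have sd : (cut x < c) = side.
  by case: side hs {hc} => // hs; apply/negbTE; rewrite -leNgt ltW.
rewrite -(hmap_fix xXS sd); apply/imfsetP; exists x => //.
by rewrite inWside XS_W.
Qed.

Lemma XS_split : (#|` XS| <= #|` pts X (child S vert c true)| + #|` pts X (child S vert c false)|)%N.
Proof.
apply: (@leq_trans #|` (pts X (child S vert c true) `|` pts X (child S vert c false))%fset|); last by rewrite cardfsU leq_subr.
apply: fsubset_leq_card; apply/fsubsetP => x xXS.
move: (xXS); rewrite /XS in_pts => /andP[xX xS].
rewrite inE; apply/orP.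
have := Hnoline xXS; rewrite neq_lt => /orP[h|h].
  by left; rewrite in_pts xX (child_back (side := true)).
by right; rewrite in_pts xX (child_back (side := false)).
Qed.

End Node.

Lemma node_cost_split X S vert c :
  node_cost X S vert c = (ks X S vert c true + ks X S vert c false)%N.
Proof.
rewrite /node_cost /ks -big_split; apply: eq_bigr => p _.
rewrite -big_split; apply: eq_bigr => q _.
rewrite /Ps /condn; case: [&& _, _ & _] => //=.
by case: (_ < c).
Qed.

Lemma pts_sub (Z : {fset point}) S : (pts Z S `<=` Z)%fset.
Proof. by apply/fsubsetP => z; rewrite in_pts => /andP[]. Qed.

Lemma node_step X (HX : is_permutation X) S vert c s Z :
  satisfied Z -> (pts X S `<=` Z)%fset -> line_inside vert c S ->
  (forall p, p \in pts X S -> cut_coord vert p != c) ->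
  exists ZL ZR, [/\ satisfied ZL, satisfied ZR,
     (pts X (child S vert c true) `<=` ZL)%fset,
     (pts X (child S vert c false) `<=` ZR)%fset &
     (#|` ZL| + #|` ZR| + ks X S vert c s <= #|` pts Z S|)%N].
Proof.
move=> sZ sub hl hn.
exists (Zc X S vert c s Z true), (Zc X S vert c s Z false); split.
- exact: Zc_sat.
- exact: Zc_sat.
- exact: Zc_contains.
- exact: Zc_contains.
- have := count3 vert c s sZ sub; have := ks_le HX vert c s sZ sub.
  have := Zc_card HX vert c s sZ sub true; have := Zc_card HX vert c s sZ sub false.
  lia.
Qed.

Lemma main_ind X (HX : is_permutation X) T : forall S Z,
  valid X S T -> satisfied Z -> (pts X S `<=` Z)%fset ->
  (tree_cost X S T + 2 * #|` pts X S| <= 2 * #|` pts Z S|)%N.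
Proof.
elim: T => [|vert c l IHl r IHr] S Z /=.
  move=> _ _ sub; rewrite add0n leq_mul2l /=.
  apply: fsubset_leq_card; apply/fsubsetP => x; rewrite !in_pts => /andP[xX xS].
  by rewrite xS andbT (fsubsetP sub) // in_pts xX.
move=> [hl [hn [_ [_ [vl vr]]]]] sZ sub.
have [ZL [ZR [sL sR cL cR k1]]] := node_step HX true sZ sub hl hn.
have [ZL' [ZR' [sL' sR' cL' cR' k2]]] := node_step HX false sZ sub hl hn.
have a1 := IHl _ _ vl sL cL; have a2 := IHr _ _ vr sR cR.
have a3 := IHl _ _ vl sL' cL'; have a4 := IHr _ _ vr sR' cR'.
have b1 := fsubset_leq_card (pts_sub ZL (split_left vert c S)).
have b2 := fsubset_leq_card (pts_sub ZR (split_right vert c S)).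
have b3 := fsubset_leq_card (pts_sub ZL' (split_left vert c S)).
have b4 := fsubset_leq_card (pts_sub ZR' (split_right vert c S)).
have x1 := XS_split hn.
rewrite node_cost_split.
rewrite /child /= in x1.
move: k1 k2 a1 a2 a3 a4 b1 b2 b3 b4 x1. move: (ks X S vert c true) (ks X S vert c false) (#|` ZL|) (#|` ZR|) (#|` ZL'|) (#|` ZR'|) (#|` pts Z S|) (#|` pts X S|). move: (#|` pts X (split_left vert c S)|) (#|` pts X (split_right vert c S)|) (tree_cost X (split_left vert c S) l) (tree_cost X (split_right vert c S) r) (#|` pts ZL (split_left vert c S)|) (#|` pts ZR (split_right vert c S)|) (#|` pts ZL' (split_left vert c S)|) (#|` pts ZR' (split_right vert c S)|). lia.
Qed.

End Geo.

Lemma ex_min_nat (P : nat -> Prop) n : P n -> exists m, P m /\ (forall k, P k -> (m <= k)%N).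
Proof.
elim/ltn_ind: n => n IH Pn.
case: (classic (exists k, (k < n)%N /\ P k)) => [[k [lt Pk]]|nk].
  exact: IH lt Pk.
exists n; split => // k Pk; rewrite leqNgt; apply/negP => lt; apply: nk; by exists k.
Qed.

Lemma grid_sat (X : {fset point}) :
  satisfied (X `|` [fset (a.1, b.2) | a in X, b in X])%fset.
Proof.
set Y0 := [fset (a.1, b.2) | a in X, b in X]%fset.
have inY : forall a b, a \in X -> b \in X -> ((a.1, b.2) \in Y0).
  by move=> a b aX bX; apply/imfset2P; exists a => //; exists b.
have gr : forall z, z \in (X `|` Y0)%fset -> exists a b, [/\ a \in X, b \in X & z = (a.1, b.2)].
  move=> z; rewrite inE => /orP[zX|/imfset2P[a aX [b bX ->]]].
    by exists z, z; case: z zX => a b zX.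
  by exists a, b.
move=> p q /gr[a [b [aX bX ep]]] /gr[a' [b' [aX' bX' eq]]] ncol.
exists (p.1, q.2).
  by rewrite inE; apply/orP; right; rewrite ep eq /=; apply: inY.
move: ncol; rewrite /collinear negb_or => /andP[n1 n2].
apply/and3P; split.
- apply: contra n2 => /eqP/(congr1 snd) /= e; by rewrite e.
- apply: contra n1 => /eqP/(congr1 fst) /= e; by rewrite e.
- rewrite in_boxE /btw /=; lia.
Qed.

Lemma tree_bound (X : {fset point}) (HX : is_permutation X) B T Y :
  is_guillotine_tree X B T -> satisfied (X `|` Y)%fset -> (tree_cost X B T <= 2 * #|` Y|)%N.
Proof.
move=> [bb vT] sXY.
have sub : (pts X B `<=` X `|` Y)%fset.
  apply: fsubset_trans (pts_sub X B) _; exact: fsubsetUl.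
have := main_ind HX vT sXY sub.
have h1 : (#|` X| <= #|` pts X B|)%N.
  apply: fsubset_leq_card; apply/fsubsetP => x xX; by rewrite in_pts xX bb.
have h2 := fsubset_leq_card (pts_sub (X `|` Y)%fset B).
have h3 : (#|` (X `|` Y)%fset| <= #|` X| + #|` Y|)%N by rewrite cardfsU leq_subr.
move: h1 h2 h3.
move: (#|` X|) (#|` pts X B|) (#|` pts (X `|` Y)%fset B|) (#|` (X `|` Y)%fset|) (#|` Y|) (tree_cost X B T).
lia.
Qed.

Theorem lemma5p3 (X : {fset point}) :
  is_permutation X -> (GB X <= 2 * opt X)%N.
Proof.
move=> HX.
rewrite /GB /natmax; case: excluded_middle_informative => [H|_]; last by [].
case: (constructive_indefinite_description _ H) => /= g [[B [T [HT <-]]] _].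
rewrite /opt /natmin; case: excluded_middle_informative => [H'|nH].
  case: (constructive_indefinite_description _ H') => /= m [[Y [sY <-]] _].
  exact: tree_bound HT sY.
exfalso; apply: nH.
apply: (@ex_min_nat _ #|` [fset (a.1, b.2) | a in X, b in X]%fset|).
by eexists; split; [exact: grid_sat|].
Qed.
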